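(* Let $c>0$, $q>0$, let $f,g:\mathbb{R}\to\mathbb{R}$ be continuous, $a\in\mathbb{R}$, and let $\varphi$ be a solution on $[0,R)$ of $$\varphi''+\frac{c-1}{r}\varphi'=f(\varphi)+g(\varphi)|\varphi'|^q,\qquad\varphi(0)=a,\qquad\varphi'(0)=0 .$$ Then: \begin{itemize} \item[(i)] if $f$ is positive, then $\varphi$ is strictly increasing; \item[(ii)] if $f$ is positive, $f,g$ are nondecreasing, and $c\ge1$, then $\varphi$ is convex and $\varphi'(r)\le\left(\frac{f(\varphi(r))}{g^-(\varphi(r))}\right)^{1/q}$ for all $r\in[0,R)$ (the right-hand side being $+\infty$ where $g^-(\varphi(r))=0$); \item[(iii)] if $f$ is positive, $f,g$ are nondecreasing, $g$ is nonnegative and $c\ge1$, then $\varphi''(r)\ge\frac{\varphi'(r)}{r}$ for all $r\in(0,R)$. \end{itemize}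
   Context: A solution on $[0,R)$, $0<R\le+\infty$, is a function $\varphi\in C^2((0,R))\cap C([0,R))$ satisfying the ODE on $(0,R)$, $\varphi(0)=a$, $\lim_{r\to0^+}\varphi'(r)=0=\varphi'(0)$, and such that $\lim_{r\to0^+}\varphi''(r)$ exists in $\mathbb{R}$. $g^-=\max(-g,0)$. *)

(* Defs.v *)
From Stdlib Require Import Reals Lra.
From Coquelicot Require Import Coquelicot.
Open Scope R_scope.

(* |x|^q for real q > 0, with the convention 0^q = 0 (Rpower needs a positive base). *)
Definition abspow (x q : R) : R :=
  if Req_EM_T x 0 then 0 else Rpower (Rabs x) q.

Definition negpart (y : R) : R := Rmax (- y) 0.

Definition is_right_deriv (phi : R -> R) (r d : R) : Prop :=
  filterlim (fun h => (phi (r + h) - phi r) / h) (at_right 0) (locally d).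

Definition is_solution (c q : R) (f g : R -> R) (a : R) (Rm : Rbar) (phi : R -> R) : Prop :=
  Rbar_lt 0 Rm /\
  (forall r, 0 < r -> Rbar_lt r Rm ->
     ex_derive phi r /\ ex_derive (Derive phi) r /\ continuous (Derive_n phi 2) r) /\
  (* phi in C([0,Rm)) : continuity at 0 from the right (interior continuity follows from C^2) *)
  filterlim phi (at_right 0) (locally (phi 0)) /\
  (forall r, 0 < r -> Rbar_lt r Rm ->
     Derive_n phi 2 r + (c - 1) / r * Derive phi r
     = f (phi r) + g (phi r) * abspow (Derive phi r) q) /\
  phi 0 = a /\
  is_right_deriv phi 0 0 /\
  filterlim (Derive phi) (at_right 0) (locally 0) /\
  (exists L : R, filterlim (Derive_n phi 2) (at_right 0) (locally L)).

(* Main.v *)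
Require Import Defs.
From Stdlib Require Import Reals Lra.
From Coquelicot Require Import Coquelicot.
Open Scope R_scope.

Definition ev (P : R -> Prop) := exists d, 0 < d /\ forall r, 0 < r < d -> P r.

Lemma ev_and (P Q : R -> Prop) : ev P -> ev Q -> ev (fun r => P r /\ Q r).
Proof.
  intros [d1 [H1 P1]] [d2 [H2 P2]]. exists (Rmin d1 d2). split.
  apply Rmin_case; lra.
  intros r Hr. pose proof (Rmin_l d1 d2). pose proof (Rmin_r d1 d2).
  split; [apply P1|apply P2]; lra.
Qed.

Lemma ev_small (e : R) : 0 < e -> ev (fun r => r < e).
Proof. intros. exists e. split; [lra| intros; lra]. Qed.

Lemma ev_ex (P : R -> Prop) : ev P -> exists r, 0 < r /\ P r.
Proof. intros [d [Hd P1]]. exists (d/2). split. lra. apply P1. lra. Qed.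

Lemma ev_Rm (Rm : Rbar) : Rbar_lt 0 Rm -> ev (fun r => Rbar_lt r Rm).
Proof.
  destruct Rm as [x| |]; simpl; intros H.
  - exists x. split; [lra| intros; lra].
  - exists 1. split; [lra| tauto].
  - contradiction.
Qed.

Lemma lim_ev (h : R -> R) (l : R) :
  filterlim h (at_right 0) (locally l) ->
  forall e, 0 < e -> ev (fun r => Rabs (h r - l) < e).
Proof.
  intros H e He.
  apply filterlim_locally with (eps := mkposreal e He) in H.
  destruct H as [d Hd]. exists d. split. apply cond_pos.
  intros r Hr. apply Hd. 2: lra.
  unfold ball; simpl; unfold AbsRing_ball, abs, minus, plus, opp; simpl.
  rewrite Ropp_0, Rplus_0_r, Rabs_pos_eq; lra.
Qed.

Lemma ev_lim (h : R -> R) (l : R) :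
  (forall e, 0 < e -> ev (fun r => Rabs (h r - l) < e)) ->
  filterlim h (at_right 0) (locally l).
Proof.
  intros H. apply filterlim_locally. intros eps.
  destruct (H eps (cond_pos eps)) as [d [Hd P]].
  exists (mkposreal d Hd). intros y Hy Hy0.
  unfold ball in *; simpl in *; unfold AbsRing_ball, abs, minus, plus, opp in *; simpl in *.
  apply P. rewrite Ropp_0, Rplus_0_r, Rabs_pos_eq in Hy; lra.
Qed.

Lemma cont_ed (f : R -> R) (x : R) : continuous f x ->
  forall e, 0 < e -> exists d, 0 < d /\ forall y, Rabs (y - x) < d -> Rabs (f y - f x) < e.
Proof.
  intros H e He. apply continuity_pt_filterlim in H.
  destruct (H e He) as [d [Hd P]]. exists d. split; auto.
  intros y Hy. destruct (Req_dec y x) as [->|Hne].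
  - rewrite Rminus_eq_0, Rabs_R0; lra.
  - apply (P y). split. split. exact I. auto. exact Hy.
Qed.

Lemma cpt_ed (f : R -> R) (x : R) : continuity_pt f x ->
  forall e, 0 < e -> exists d, 0 < d /\ forall y, Rabs (y - x) < d -> Rabs (f y - f x) < e.
Proof. intros H; apply cont_ed, continuity_pt_filterlim, H. Qed.

Lemma lim_uniq (h : R -> R) (l1 l2 : R) :
  filterlim h (at_right 0) (locally l1) -> filterlim h (at_right 0) (locally l2) -> l1 = l2.
Proof.
  intros H1 H2. apply Rminus_diag_uniq. apply Rabs_eq_0.
  destruct (Rle_lt_or_eq_dec 0 (Rabs (l1 - l2)) (Rabs_pos _)) as [Hp|Hp]; [|auto].
  exfalso. set (e := Rabs (l1 - l2) / 3).
  destruct (ev_ex _ (ev_and _ _ (lim_ev _ _ H1 e ltac:(unfold e; lra)) (lim_ev _ _ H2 e ltac:(unfold e; lra)))) as [r [_ [A B]]].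
  assert (Rabs (l1 - l2) <= Rabs (h r - l2) + Rabs (h r - l1)).
  { replace (l1 - l2) with ((h r - l2) - (h r - l1)) by ring.
    eapply Rle_trans. apply Rabs_triang. rewrite Rabs_Ropp. lra. }
  unfold e in *. lra.
Qed.

Lemma abspow_0 q : abspow 0 q = 0.
Proof. unfold abspow. destruct (Req_EM_T 0 0); [auto|congruence]. Qed.

Lemma abspow_pos x q : 0 < x -> abspow x q = Rpower x q.
Proof. intros H. unfold abspow. destruct (Req_EM_T x 0). lra. rewrite Rabs_pos_eq; lra. Qed.

Lemma abspow_ge0 x q : 0 <= abspow x q.
Proof. unfold abspow. destruct (Req_EM_T x 0). lra. unfold Rpower. left; apply exp_pos. Qed.

Lemma Rpower_pos x y : 0 < Rpower x y.
Proof. unfold Rpower; apply exp_pos. Qed.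

Lemma abspow_small q : 0 < q -> forall e, 0 < e ->
  exists d, 0 < d /\ forall x, Rabs x < d -> abspow x q < e.
Proof.
  intros Hq e He. exists (Rpower e (1/q)). split. apply Rpower_pos.
  intros x Hx. unfold abspow. destruct (Req_EM_T x 0). lra.
  assert (E : Rpower (Rpower e (1/q)) q = e).
  { rewrite Rpower_mult. replace (1/q*q) with 1 by (field; lra). apply Rpower_1; lra. }
  rewrite <- E.
  apply Rlt_Rpower_l. lra. split; auto. apply Rabs_pos_lt; auto.
Qed.

Lemma deriv_pos (h : R -> R) (x l : R) : is_derive h x l -> 0 < l ->
  exists eta, 0 < eta /\ (forall y, x < y < x + eta -> h x < h y)
                     /\ (forall y, x - eta < y < x -> h y < h x).
Proof.
  intros H Hl. apply is_derive_Reals in H.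
  destruct (H l Hl) as [d Hd]. exists d. split. apply cond_pos. split.
  - intros y Hy. specialize (Hd (y - x) ltac:(lra) ltac:(rewrite Rabs_pos_eq; lra)).
    replace (x + (y - x)) with y in Hd by ring.
    apply Rabs_def2 in Hd. destruct Hd as [_ Hd].
    assert (0 < (h y - h x) / (y - x)) by lra.
    assert (0 < h y - h x). { replace (h y - h x) with ((h y - h x)/(y-x) * (y - x)) by (field; lra).
      apply Rmult_lt_0_compat; lra. } lra.
  - intros y Hy. specialize (Hd (y - x) ltac:(lra) ltac:(rewrite Rabs_left; lra)).
    replace (x + (y - x)) with y in Hd by ring.
    apply Rabs_def2 in Hd. destruct Hd as [_ Hd].
    assert (0 < (h y - h x) / (y - x)) by lra.
    assert (0 < h x - h y). { replace (h x - h y) with ((h y - h x)/(y-x) * (x - y)) by (field; lra).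
      apply Rmult_lt_0_compat; lra. } lra.
Qed.

Lemma mvt_bound (h dh : R -> R) (a b : R) (P : R -> Prop) : a < b ->
  (forall x, a < x < b -> is_derive h x (dh x)) ->
  (forall x, a <= x <= b -> continuity_pt h x) ->
  (forall x, a < x < b -> P (dh x)) ->
  exists v, P v /\ h b - h a = v * (b - a).
Proof.
  intros Hab Hd Hc HP.
  set (m := (a + b) / 2).
  set (df := fun x => if Rlt_dec a x then if Rlt_dec x b then dh x else dh m else dh m).
  assert (Hdf : forall x, P (df x)).
  { intros x. unfold df. destruct (Rlt_dec a x); [destruct (Rlt_dec x b)|];
      apply HP; unfold m; lra. }
  destruct (MVT_gen h a b df) as [c [_ Hc']].
  - intros x. rewrite Rmin_left, Rmax_right by lra. intros Hx.
    unfold df. destruct (Rlt_dec a x); [destruct (Rlt_dec x b)|]; try lra. apply Hd; lra.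
  - intros x. rewrite Rmin_left, Rmax_right by lra. apply Hc.
  - exists (df c). split; auto.
Qed.

Lemma last_nonneg (h : R -> R) (a b : R) : a < b ->
  (forall x, a <= x <= b -> continuity_pt h x) -> 0 <= h a -> h b < 0 ->
  exists r1, a <= r1 < b /\ h r1 = 0 /\ forall x, r1 < x <= b -> h x < 0.
Proof.
  intros Hab Hc Ha Hb.
  set (E := fun x => a <= x <= b /\ 0 <= h x).
  destruct (completeness E) as [m [Hub Hlub]].
  - exists b. intros x [Hx _]. lra.
  - exists a. split; [lra|auto].
  assert (Ham : a <= m) by (apply Hub; split; [lra|auto]).
  assert (Hmb : m <= b) by (apply Hlub; intros x [Hx _]; lra).
  assert (Hafter : forall x, m < x <= b -> h x < 0).
  { intros x Hx. destruct (Rlt_le_dec (h x) 0) as [H|H]; auto.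
    assert (x <= m) by (apply Hub; split; [lra|auto]). lra. }
  assert (Hm0 : 0 <= h m).
  { destruct (Rlt_le_dec (h m) 0) as [H|H]; auto. exfalso.
    destruct (cpt_ed h m (Hc m ltac:(lra)) (- h m) ltac:(lra)) as [d [Hd P]].
    assert (m <= Rmax a (m - d/2)).
    { apply Hlub. intros x [Hx Hx0]. destruct (Rle_lt_dec x (m - d/2)) as [H1|H1].
      - eapply Rle_trans; [exact H1|apply Rmax_r].
      - exfalso. assert (x <= m) by (apply Hub; split; auto).
        assert (Rabs (h x - h m) < - h m) by (apply P; rewrite Rabs_left1; lra).
        apply Rabs_def2 in H2. lra. }
    revert H0. apply Rmax_case; intros.
    - assert (m = a) by lra. subst m. lra.
    - lra. }
  assert (Hmb' : m < b) by (destruct (Req_dec m b); [subst; lra|lra]).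
  exists m. split; [lra|]. split; [|exact Hafter].
  destruct (Rle_lt_or_eq_dec 0 (h m) Hm0) as [H|H]; [|lra].
  exfalso.
  destruct (cpt_ed h m (Hc m ltac:(lra)) (h m) H) as [d [Hd P]].
  set (x := Rmin (m + d/2) b).
  assert (X1 : x <= m + d/2) by apply Rmin_l.
  assert (X2 : x <= b) by apply Rmin_r.
  assert (X3 : m < x) by (unfold x; apply Rmin_case; lra).
  assert (H0 : m < x <= b) by lra.
  assert (H1 : Rabs (h x - h m) < h m).
  { apply P. rewrite Rabs_pos_eq; lra. }
  apply Rabs_def2 in H1. specialize (Hafter x H0). lra.
Qed.

Lemma der_cont (h : R -> R) x l : is_derive h x l -> continuity_pt h x.
Proof.
  intros H. apply continuity_pt_filterlim.
  apply (ex_derive_continuous (K:=R_AbsRing) (V:=R_NormedModule)). exists l; auto.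
Qed.

Lemma le_lim (u : R -> R) (K l r : R) : 0 < r ->
  (forall t, 0 < t < r -> K <= u t) ->
  (forall e, 0 < e -> ev (fun t => Rabs (u t - l) < e)) -> K <= l.
Proof.
  intros Hr H Hl. destruct (Rle_lt_dec K l) as [H1|H1]; auto. exfalso.
  destruct (ev_ex _ (ev_and _ _ (Hl (K - l) ltac:(lra)) (ev_small r Hr))) as [t [Ht [A B]]].
  specialize (H t ltac:(lra)). apply Rabs_def2 in A. lra.
Qed.

Lemma ev_lin (psi : R -> R) (m : R) :
  filterlim psi (at_right 0) (locally 0) ->
  forall e, 0 < e -> ev (fun t => Rabs (m * t - psi t - 0) < e).
Proof.
  intros H e He.
  assert (Hm : 0 < Rabs m + 1) by (pose proof (Rabs_pos m); lra).
  destruct (ev_and _ _ (lim_ev _ _ H (e/2) ltac:(lra)) (ev_small (e / 2 / (Rabs m + 1)) ltac:(apply Rdiv_lt_0_compat; lra)))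
    as [d [Hd P]].
  exists d. split; auto. intros t Ht. destruct (P t Ht) as [A B].
  rewrite Rminus_0_r in *.
  eapply Rle_lt_trans. unfold Rminus. apply Rabs_triang. rewrite Rabs_Ropp, Rabs_mult, (Rabs_pos_eq t) by lra.
  assert (Rabs m * t <= e/2).
  { apply Rlt_le in B. apply (Rmult_le_compat_l (Rabs m + 1)) in B; [|lra].
    replace ((Rabs m + 1) * (e / 2 / (Rabs m + 1))) with (e/2) in B by (field; lra).
    assert (0 <= t * 1) by lra. nra. }
  lra.
Qed.

Lemma ratio_bound (psi dpsi : R -> R) (d m M : R) : 0 < d ->
  (forall x, 0 < x < d -> is_derive psi x (dpsi x)) ->
  (forall x, 0 < x < d -> m <= dpsi x <= M) ->
  filterlim psi (at_right 0) (locally 0) ->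
  forall r, 0 < r < d -> m * r <= psi r <= M * r.
Proof.
  intros Hd Hder Hb Hl r Hr.
  assert (Key : forall t, 0 < t < r -> m * (r - t) <= psi r - psi t <= M * (r - t)).
  { intros t Ht.
    destruct (mvt_bound psi dpsi t r (fun v => m <= v <= M)) as [v [Hv E]].
    - lra.
    - intros x Hx; apply Hder; lra.
    - intros x Hx. eapply der_cont. apply Hder; lra.
    - intros x Hx; apply Hb; lra.
    - rewrite E. split; apply Rmult_le_compat_r; lra. }
  split.
  - assert (m * r - psi r <= 0).
    { apply (le_lim (fun t => m * t - psi t) _ 0 r); [lra| |apply ev_lin; auto].
      intros t Ht. specialize (Key t Ht). lra. }
    lra.
  - assert (psi r - M * r <= 0).
    { apply (le_lim (fun t => - (M * t - psi t)) _ 0 r); [lra| |].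
      + intros t Ht. specialize (Key t Ht). lra.
      + intros e He. destruct (ev_lin psi M Hl e He) as [d' [Hd' P]]. exists d'. split; auto.
        intros t Ht. specialize (P t Ht). replace (- (M * t - psi t) - 0) with (- (M * t - psi t - 0)) by ring.
        rewrite Rabs_Ropp; auto. }
    lra.
Qed.

Lemma ev_ratio (phi : R -> R) (Rm : Rbar) (L : R) :
  Rbar_lt 0 Rm ->
  (forall r, 0 < r -> Rbar_lt r Rm ->
     ex_derive phi r /\ ex_derive (Derive phi) r /\ continuous (Derive_n phi 2) r) ->
  filterlim (Derive phi) (at_right 0) (locally 0) ->
  filterlim (Derive_n phi 2) (at_right 0) (locally L) ->
  forall e, 0 < e -> ev (fun r => Rabs (Derive phi r / r - L) <= e).
Proof.
  intros HR0 HC2 Hp0 HL e He.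
  destruct (ev_and _ _ (ev_Rm _ HR0) (lim_ev _ _ HL e He)) as [d [Hd P]].
  exists d. split; auto. intros r Hr.
  destruct (ratio_bound (Derive phi) (Derive_n phi 2) d (L - e) (L + e) Hd) with (r := r)
    as [A B]; auto.
  - intros x Hx. destruct (P x Hx) as [H1 _]. destruct (HC2 x ltac:(lra) H1) as [_ [H2 _]].
    apply Derive_correct in H2. exact H2.
  - intros x Hx. destruct (P x Hx) as [_ H1]. apply Rabs_def2 in H1. lra.
  - apply Rabs_le. split.
    + apply (Rmult_le_reg_r r); [lra|]. unfold Rdiv. rewrite Rmult_minus_distr_r, Rmult_assoc, Rinv_l by lra. lra.
    + apply (Rmult_le_reg_r r); [lra|]. unfold Rdiv. rewrite Rmult_minus_distr_r, Rmult_assoc, Rinv_l by lra. lra.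
Qed.

Lemma ev_F (c q : R) (f g : R -> R) (a : R) (phi : R -> R) :
  0 < q -> continuous f a -> continuous g a ->
  filterlim phi (at_right 0) (locally a) ->
  filterlim (Derive phi) (at_right 0) (locally 0) ->
  forall e, 0 < e -> ev (fun r => Rabs (f (phi r) + g (phi r) * abspow (Derive phi r) q - f a) < e).
Proof.
  intros Hq Hf Hg Hphi Hp0 e He.
  destruct (cont_ed f a Hf (e/2) ltac:(lra)) as [df [Hdf Pf]].
  destruct (cont_ed g a Hg 1 ltac:(lra)) as [dg [Hdg Pg]].
  set (G := Rabs (g a) + 1).
  assert (HG : 0 < G) by (unfold G; pose proof (Rabs_pos (g a)); lra).
  destruct (abspow_small q Hq (e / 2 / G) ltac:(apply Rdiv_lt_0_compat; lra)) as [dp [Hdp Pp]].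
  destruct (ev_and _ _ (lim_ev _ _ Hphi (Rmin df dg) ltac:(apply Rmin_case; lra))
                      (lim_ev _ _ Hp0 dp Hdp)) as [d [Hd P]].
  exists d. split; auto. intros r Hr. destruct (P r Hr) as [A B].
  assert (A1 : Rabs (phi r - a) < df) by (pose proof (Rmin_l df dg); lra).
  assert (A2 : Rabs (phi r - a) < dg) by (pose proof (Rmin_r df dg); lra).
  specialize (Pf _ A1). specialize (Pg _ A2). rewrite Rminus_0_r in B. specialize (Pp _ B).
  assert (Hgb : Rabs (g (phi r)) <= G).
  { unfold G. replace (g (phi r)) with ((g (phi r) - g a) + g a) by ring.
    eapply Rle_trans. apply Rabs_triang. lra. }
  pose proof (abspow_ge0 (Derive phi r) q) as H0.
  assert (Rabs (g (phi r) * abspow (Derive phi r) q) <= e/2).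
  { rewrite Rabs_mult, (Rabs_pos_eq (abspow _ _)) by auto.
    apply Rlt_le in Pp. apply (Rmult_le_compat_l G) in Pp; [|lra].
    replace (G * (e / 2 / G)) with (e/2) in Pp by (field; lra).
    pose proof (Rabs_pos (g (phi r))).
    assert (Rabs (g (phi r)) * abspow (Derive phi r) q <= G * abspow (Derive phi r) q)
      by (apply Rmult_le_compat_r; auto). lra. }
  replace (f (phi r) + g (phi r) * abspow (Derive phi r) q - f a) with
    ((f (phi r) - f a) + g (phi r) * abspow (Derive phi r) q) by ring.
  eapply Rle_lt_trans. apply Rabs_triang. lra.
Qed.

Lemma L_val (c q : R) (f g : R -> R) (a : R) (Rm : Rbar) (phi : R -> R) :
  0 < c -> 0 < q ->
  (forall x, continuous f x) -> (forall x, continuous g x) ->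
  is_solution c q f g a Rm phi ->
  exists L, filterlim (Derive_n phi 2) (at_right 0) (locally L) /\ c * L = f a.
Proof.
  intros Hc Hq Hf Hg Hs.
  destruct Hs as (HR0 & HC2 & Hc0 & Hode & Ha & Hrd & Hp0 & [L HL]).
  exists L. split; auto.
  rewrite Ha in Hc0.
  apply Rminus_diag_uniq. apply Rabs_eq_0.
  destruct (Rle_lt_or_eq_dec 0 (Rabs (c * L - f a)) (Rabs_pos _)) as [Hp|Hp]; [|auto].
  exfalso.
  set (K := 2 + Rabs (c - 1)).
  assert (HK : 0 < K) by (unfold K; pose proof (Rabs_pos (c-1)); lra).
  set (e := Rabs (c * L - f a) / (2 * K)).
  assert (He : 0 < e) by (unfold e; apply Rdiv_lt_0_compat; lra).
  destruct (ev_ex _ (ev_and _ _ (ev_Rm _ HR0) (ev_and _ _ (lim_ev _ _ HL e He)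
     (ev_and _ _ (ev_ratio phi Rm L HR0 HC2 Hp0 HL e He) (ev_F c q f g a phi Hq (Hf a) (Hg a) Hc0 Hp0 e He)))))
    as [r [Hr [HrR [A [B C]]]]].
  specialize (Hode r Hr HrR).
  assert (E : c * L - f a = - (Derive_n phi 2 r - L) - (c - 1) * (Derive phi r / r - L)
     + (f (phi r) + g (phi r) * abspow (Derive phi r) q - f a)).
  { rewrite <- Hode. field. lra. }
  assert (Rabs (c * L - f a) <= e + Rabs (c - 1) * e + e).
  { rewrite E. eapply Rle_trans. apply Rabs_triang. eapply Rle_trans. apply Rplus_le_compat_r.
    unfold Rminus at 1. apply Rabs_triang. rewrite Rabs_Ropp, Rabs_Ropp, Rabs_mult.
    assert (Rabs (c - 1) * Rabs (Derive phi r / r - L) <= Rabs (c-1) * e)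
      by (apply Rmult_le_compat_l; [apply Rabs_pos|auto]). lra. }
  assert (e + Rabs (c - 1) * e + e = K * e) by (unfold K; ring).
  assert (K * e = Rabs (c * L - f a) / 2) by (unfold e; field; lra).
  lra.
Qed.

Lemma Rbar_lt_le (r s : R) (Rm : Rbar) : r <= s -> Rbar_lt s Rm -> Rbar_lt r Rm.
Proof. intros H1 H2. apply Rbar_le_lt_trans with s; simpl; auto. Qed.

Lemma sol_der (c q : R) (f g : R -> R) (a : R) (Rm : Rbar) (phi : R -> R) :
  is_solution c q f g a Rm phi ->
  forall r, 0 < r -> Rbar_lt r Rm ->
  is_derive phi r (Derive phi r) /\ is_derive (Derive phi) r (Derive_n phi 2 r)
  /\ continuity_pt (Derive_n phi 2) r.
Proof.
  intros Hs r Hr HR. destruct Hs as (HR0 & HC2 & _).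
  destruct (HC2 r Hr HR) as [A [B C]]. split; [|split].
  - apply Derive_correct; auto.
  - apply Derive_correct in B. exact B.
  - apply continuity_pt_filterlim; auto.
Qed.

Lemma near0 (c q : R) (f g : R -> R) (a : R) (Rm : Rbar) (phi : R -> R) :
  0 < c -> 0 < q ->
  (forall x, continuous f x) -> (forall x, continuous g x) ->
  is_solution c q f g a Rm phi -> (forall x, 0 < f x) ->
  exists d0, 0 < d0 /\ forall r, 0 < r < d0 ->
    Rbar_lt r Rm /\ 0 < Derive_n phi 2 r /\ 0 < Derive phi r.
Proof.
  intros Hc Hq Hf Hg Hs Hfp.
  destruct (L_val c q f g a Rm phi Hc Hq Hf Hg Hs) as [L [HL HcL]].
  assert (HLp : 0 < L). { pose proof (Hfp a). nra. }
  pose proof Hs as Hs'.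
  destruct Hs' as (HR0 & HC2 & Hc0 & Hode & Ha & Hrd & Hp0 & _).
  destruct (ev_and _ _ (ev_Rm _ HR0) (lim_ev _ _ HL (L/2) ltac:(lra))) as [d [Hd P]].
  exists d. split; auto. intros r Hr. destruct (P r Hr) as [H1 H2].
  apply Rabs_def2 in H2. split; auto. split. lra.
  destruct (ratio_bound (Derive phi) (Derive_n phi 2) d (L/2) (3*L/2) Hd) with (r := r)
    as [A B]; auto.
  - intros x Hx. destruct (P x Hx) as [H3 _]. apply (sol_der c q f g a Rm phi Hs x); lra || auto.
  - intros x Hx. destruct (P x Hx) as [_ H3]. apply Rabs_def2 in H3. lra.
  - nra.
Qed.

Lemma zero_psi (c q : R) (f g : R -> R) (a : R) (Rm : Rbar) (phi : R -> R) :
  is_solution c q f g a Rm phi -> (forall x, 0 < f x) ->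
  forall r, 0 < r -> Rbar_lt r Rm -> Derive phi r = 0 -> 0 < Derive_n phi 2 r.
Proof.
  intros Hs Hfp r Hr HR H0. destruct Hs as (_ & _ & _ & Hode & _).
  specialize (Hode r Hr HR). rewrite H0, abspow_0 in Hode.
  specialize (Hfp (phi r)). replace (Derive_n phi 2 r) with (f (phi r)); [auto|].
  rewrite Rmult_0_r, Rmult_0_r, !Rplus_0_r in Hode. symmetry; exact Hode.
Qed.

Lemma psi_pos (c q : R) (f g : R -> R) (a : R) (Rm : Rbar) (phi : R -> R) :
  0 < c -> 0 < q ->
  (forall x, continuous f x) -> (forall x, continuous g x) ->
  is_solution c q f g a Rm phi -> (forall x, 0 < f x) ->
  forall r, 0 < r -> Rbar_lt r Rm -> 0 < Derive phi r.
Proof.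
  intros Hc Hq Hf Hg Hs Hfp r0 Hr0 HR0.
  destruct (near0 c q f g a Rm phi Hc Hq Hf Hg Hs Hfp) as [d0 [Hd0 P0]].
  destruct (Rlt_le_dec 0 (Derive phi r0)) as [H|H]; auto. exfalso.
  pose proof (sol_der c q f g a Rm phi Hs) as SD.
  set (a0 := Rmin (d0/2) (r0/2)).
  assert (Ha0 : 0 < a0 <= r0/2 /\ a0 <= d0/2)
    by (unfold a0; split; [split; [apply Rmin_case; lra|apply Rmin_r]|apply Rmin_l]).
  assert (Hpa0 : 0 < Derive phi a0) by (apply P0; lra).
  assert (Hb : exists b, a0 < b <= r0 /\ Derive phi b < 0).
  { destruct H as [H|H]. exists r0. split; [lra|auto].
    assert (Z := zero_psi c q f g a Rm phi Hs Hfp r0 Hr0 HR0 H).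
    destruct (SD r0 Hr0 HR0) as [_ [D _]].
    destruct (deriv_pos _ _ _ D Z) as [eta [Heta [_ Hl]]].
    set (y := r0 - Rmin eta (r0 - a0) / 2).
    assert (0 < Rmin eta (r0 - a0) <= eta /\ Rmin eta (r0 - a0) <= r0 - a0)
      by (split; [split; [apply Rmin_case; lra|apply Rmin_l]|apply Rmin_r]).
    exists y. unfold y. split. lra. rewrite <- H. apply Hl. lra. }
  destruct Hb as [b [Hab Hbn]].
  assert (HbR : Rbar_lt b Rm) by (apply (Rbar_lt_le b r0); lra || auto).
  destruct (last_nonneg (Derive phi) a0 b) as [r1 [Hr1 [Z1 Neg]]]; try lra.
  { intros x Hx. apply der_cont with (Derive_n phi 2 x). apply SD. lra. apply (Rbar_lt_le x b); lra || auto. }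
  assert (Hr1R : Rbar_lt r1 Rm) by (apply (Rbar_lt_le r1 b); lra || auto).
  assert (Z := zero_psi c q f g a Rm phi Hs Hfp r1 ltac:(lra) Hr1R Z1).
  destruct (SD r1 ltac:(lra) Hr1R) as [_ [D _]].
  destruct (deriv_pos _ _ _ D Z) as [eta [Heta [Hr _]]].
  assert (0 < Rmin eta (b - r1) <= eta /\ Rmin eta (b - r1) <= b - r1)
    by (split; [split; [apply Rmin_case; lra|apply Rmin_l]|apply Rmin_r]).
  set (y := r1 + Rmin eta (b - r1) / 2).
  assert (Hy1 : Derive phi r1 < Derive phi y) by (apply Hr; unfold y; lra).
  assert (Hy2 : Derive phi y < 0) by (apply Neg; unfold y; lra).
  lra.
Qed.

Lemma phi_mvt (c q : R) (f g : R -> R) (a : R) (Rm : Rbar) (phi : R -> R) :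
  is_solution c q f g a Rm phi ->
  forall (P : R -> Prop) x y, 0 <= x < y -> Rbar_lt y Rm ->
  (forall z, x < z < y -> P (Derive phi z)) ->
  exists v, P v /\ phi y - phi x = v * (y - x).
Proof.
  intros Hs P x y Hxy HyR HP.
  pose proof (sol_der c q f g a Rm phi Hs) as SD.
  destruct Hs as (HR0 & HC2 & Hc0 & _).
  set (phit := fun z => if Rlt_dec 0 z then phi z else phi 0).
  assert (Eq : forall z, 0 < z -> locally z (fun t => phi t = phit t)).
  { intros z Hz. exists (mkposreal z Hz). intros t Ht.
    unfold ball in Ht; simpl in Ht; unfold AbsRing_ball, abs, minus, plus, opp in Ht; simpl in Ht.
    apply Rabs_def2 in Ht. unfold phit. destruct (Rlt_dec 0 t); [auto|lra]. }
  destruct (mvt_bound phit (Derive phi) x y P) as [v [Hv E]]; auto; try lra.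
  - intros z Hz. apply is_derive_ext_loc with phi. apply Eq; lra.
    apply SD; [lra|]. apply (Rbar_lt_le z y); lra || auto.
  - intros z Hz. destruct (Rle_lt_or_eq_dec 0 z) as [Hz0|Hz0]; [lra| |].
    + apply continuity_pt_ext_loc with phi. apply Eq; auto.
      apply der_cont with (Derive phi z). apply SD; auto. apply (Rbar_lt_le z y); lra || auto.
    + subst z. intros e He. destruct (lim_ev _ _ Hc0 e He) as [d [Hd Pd]].
      exists d. split; auto. intros t [_ Ht]. simpl in Ht. unfold R_dist in Ht. simpl.
      unfold R_dist, phit. destruct (Rlt_dec 0 0); [lra|].
      destruct (Rlt_dec 0 t).
      * apply Pd. rewrite Rminus_0_r, Rabs_pos_eq in Ht; lra.
      * rewrite Rminus_eq_0, Rabs_R0; auto.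
  - exists v. split; auto. unfold phit in E.
    destruct (Rlt_dec 0 y); [|lra]. destruct (Rlt_dec 0 x) as [_|Hx].
    + auto.
    + assert (x = 0) by lra. subst x. auto.
Qed.

Lemma der_ratio (psi : R -> R) x d : is_derive psi x d -> x <> 0 ->
  is_derive (fun t => psi t / t) x ((d - psi x / x) / x).
Proof.
  intros H Hx. apply is_derive_Reals in H. apply is_derive_Reals.
  pose proof (derivable_pt_lim_div psi id x d 1 H (derivable_pt_lim_id x) Hx) as K.
  replace ((d - psi x / x) / x) with ((d * id x - 1 * psi x) / (id x)²)
    by (unfold id, Rsqr; field; auto).
  exact K.
Qed.

Lemma der_pow (psi : R -> R) x d q : is_derive psi x d -> 0 < psi x ->
  is_derive (fun t => Rpower (psi t) q) x (q * Rpower (psi x) (q - 1) * d).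
Proof.
  intros H Hp. apply is_derive_Reals in H. apply is_derive_Reals.
  pose proof (derivable_pt_lim_comp psi (fun y => Rpower y q) x d _ H (derivable_pt_lim_power (psi x) q Hp)) as K.
  replace (q * Rpower (psi x) (q - 1) * d) with (q * Rpower (psi x) (q - 1) * d) by ring.
  exact K.
Qed.

Lemma der_Q (psi : R -> R) x d q k m : is_derive psi x d -> 0 < psi x -> x <> 0 ->
  is_derive (fun t => k * Rpower (psi t) q - m * (psi t / t)) x
    (k * (q * Rpower (psi x) (q - 1) * d) - m * ((d - psi x / x) / x)).
Proof.
  intros H Hp Hx.
  apply (is_derive_minus (fun t => k * Rpower (psi t) q) (fun t => m * (psi t / t))).
  - apply is_derive_scal. apply der_pow; auto.
  - apply is_derive_scal. apply der_ratio; auto.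
Qed.

Lemma phi_incr (c q : R) (f g : R -> R) (a : R) (Rm : Rbar) (phi : R -> R) :
  0 < c -> 0 < q ->
  (forall x, continuous f x) -> (forall x, continuous g x) ->
  is_solution c q f g a Rm phi -> (forall x, 0 < f x) ->
  forall r s, 0 <= r -> r < s -> Rbar_lt s Rm -> phi r < phi s.
Proof.
  intros Hc Hq Hf Hg Hs Hfp r s Hr Hrs HsR.
  destruct (phi_mvt c q f g a Rm phi Hs (fun v => 0 < v) r s) as [v [Hv E]]; auto.
  - intros z Hz. apply (psi_pos c q f g a Rm phi); auto. lra. apply (Rbar_lt_le z s); lra || auto.
  - assert (0 < v * (s - r)) by (apply Rmult_lt_0_compat; lra). lra.
Qed.

Lemma psi2_nonneg (c q : R) (f g : R -> R) (a : R) (Rm : Rbar) (phi : R -> R) :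
  0 < c -> 0 < q ->
  (forall x, continuous f x) -> (forall x, continuous g x) ->
  is_solution c q f g a Rm phi -> (forall x, 0 < f x) ->
  (forall x y, x <= y -> f x <= f y) ->
  (forall x y, x <= y -> g x <= g y) -> 1 <= c ->
  forall r, 0 < r -> Rbar_lt r Rm -> 0 <= Derive_n phi 2 r.
Proof.
  intros Hc Hq Hf Hg Hs Hfp Hfm Hgm Hc1 r0 Hr0 HR0.
  destruct (Rle_lt_dec 0 (Derive_n phi 2 r0)) as [H|H]; auto. exfalso.
  destruct (near0 c q f g a Rm phi Hc Hq Hf Hg Hs Hfp) as [d0 [Hd0 P0]].
  pose proof (sol_der c q f g a Rm phi Hs) as SD.
  pose proof (psi_pos c q f g a Rm phi Hc Hq Hf Hg Hs Hfp) as PP.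
  pose proof (phi_incr c q f g a Rm phi Hc Hq Hf Hg Hs Hfp) as PI.
  assert (Hode := match Hs with conj _ (conj _ (conj _ (conj X _))) => X end).
  assert (Hd0r : d0 <= r0).
  { destruct (Rle_lt_dec d0 r0); auto. destruct (P0 r0) as [_ [X _]]; lra. }
  set (a0 := d0 / 2).
  assert (Hpa0 : 0 < Derive_n phi 2 a0) by (apply P0; unfold a0; lra).
  assert (InR : forall x, 0 < x <= r0 -> Rbar_lt x Rm) by (intros; apply (Rbar_lt_le x r0); lra || auto).
  destruct (last_nonneg (Derive_n phi 2) a0 r0) as [r1 [Hr1 [Z1 Neg]]]; try (lra || (unfold a0 in *; lra)).
  { intros x Hx. apply SD. unfold a0 in *; lra. apply InR. unfold a0 in *; lra. }
  assert (Hr1p : 0 < r1) by (unfold a0 in *; lra).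
  assert (Hr1R := InR r1 ltac:(lra)).
  set (f1 := f (phi r1)). set (g1 := g (phi r1)).
  set (A := fun x => abspow (Derive phi x) q).
  assert (Hp1 := PP r1 Hr1p Hr1R).
  assert (HA1 : 0 < A r1) by (unfold A; rewrite abspow_pos by auto; apply Rpower_pos).
  assert (Key : forall x, r1 < x <= r0 ->
    f1 + g1 * A x - (c - 1) / x * Derive phi x <= Derive_n phi 2 x).
  { intros x Hx. specialize (Hode x ltac:(lra) (InR x ltac:(lra))).
    assert (Hphi : phi r1 <= phi x) by (left; apply PI; lra || apply InR; lra).
    assert (f1 <= f (phi x)) by (apply Hfm; auto).
    assert (g1 * A x <= g (phi x) * A x) by (apply Rmult_le_compat_r; [apply abspow_ge0|apply Hgm; auto]).
    unfold A in *. lra. }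
  assert (Hode1 := Hode r1 Hr1p Hr1R). rewrite Z1 in Hode1.
  destruct (Rle_lt_or_eq_dec 1 c Hc1) as [Hc1'|Hc1'].
  -
    set (Q := fun t => g1 * A t - (c - 1) * (Derive phi t / t)).
    assert (DQ : is_derive Q r1 ((c - 1) * Derive phi r1 / r1 ^ 2)).
    { apply is_derive_ext_loc with (fun t => g1 * Rpower (Derive phi t) q - (c - 1) * (Derive phi t / t)).
      - assert (He : 0 < Rmin r1 (r0 - r1)) by (apply Rmin_case; lra).
        exists (mkposreal _ He). intros t Ht.
        unfold ball in Ht; simpl in Ht; unfold AbsRing_ball, abs, minus, plus, opp in Ht; simpl in Ht.
        apply Rabs_def2 in Ht. pose proof (Rmin_l r1 (r0 - r1)). pose proof (Rmin_r r1 (r0 - r1)).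
        unfold Q, A. rewrite abspow_pos; auto. apply PP. lra. apply InR. lra.
      - destruct (SD r1 Hr1p Hr1R) as [_ [D _]].
        pose proof (der_Q (Derive phi) r1 _ q g1 (c - 1) D Hp1 ltac:(lra)) as K.
        rewrite Z1 in K. replace ((c - 1) * Derive phi r1 / r1 ^ 2) with
          (g1 * (q * Rpower (Derive phi r1) (q - 1) * 0) - (c - 1) * ((0 - Derive phi r1 / r1) / r1))
          by (field; lra). exact K. }
    assert (Hpos : 0 < (c - 1) * Derive phi r1 / r1 ^ 2).
    { apply Rdiv_lt_0_compat. apply Rmult_lt_0_compat; lra. apply pow_lt; lra. }
    destruct (deriv_pos _ _ _ DQ Hpos) as [eta [Heta [Hright _]]].
    assert (0 < Rmin eta (r0 - r1) <= eta /\ Rmin eta (r0 - r1) <= r0 - r1)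
      by (split; [split; [apply Rmin_case; lra|apply Rmin_l]|apply Rmin_r]).
    set (y := r1 + Rmin eta (r0 - r1) / 2).
    assert (Hy : r1 < y <= r0) by (unfold y; lra).
    assert (HQ := Hright y ltac:(unfold y; lra)).
    assert (K := Key y Hy). assert (Ny := Neg y Hy).
    unfold Q in HQ.
    assert (E1 : (c - 1) / y * Derive phi y = (c - 1) * (Derive phi y / y)) by (field; lra).
    assert (E2 : (c - 1) / r1 * Derive phi r1 = (c - 1) * (Derive phi r1 / r1)) by (field; lra).
    unfold A, f1, g1 in *. lra.
  -
    subst c. rewrite Rminus_eq_0 in Hode1, Key.
    assert (E0 : (0 / r1 * Derive phi r1) = 0) by (field; lra). rewrite E0 in Hode1.
    assert (Hg1 : g1 < 0).
    { assert (f1 + g1 * A r1 = 0) by (unfold f1, g1, A; lra). specialize (Hfp (phi r1)).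
      fold f1 in Hfp. destruct (Rlt_le_dec g1 0); auto. assert (0 <= g1 * A r1) by nra. lra. }
    destruct (mvt_bound (Derive phi) (Derive_n phi 2) r1 r0 (fun v => v < 0)) as [v [Hv E]]; try lra.
    + intros x Hx. apply SD. lra. apply InR. lra.
    + intros x Hx. apply der_cont with (Derive_n phi 2 x). apply SD. lra. apply InR. lra.
    + intros x Hx. apply Neg. lra.
    + assert (Hle : Derive phi r0 <= Derive phi r1) by nra.
      assert (HA : A r0 <= A r1).
      { unfold A. rewrite !abspow_pos by (apply PP; [lra|apply InR; lra]).
        apply Rle_Rpower_l. lra. split; [apply PP; [lra|apply InR; lra]|exact Hle]. }
      assert (K := Key r0 ltac:(lra)).
      assert (E3 : 0 / r0 * Derive phi r0 = 0) by (field; lra). rewrite E3 in K.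
      assert (g1 * A r1 <= g1 * A r0) by nra.
      unfold A, f1, g1 in *. lra.
Qed.

Lemma psi_mono (c q : R) (f g : R -> R) (a : R) (Rm : Rbar) (phi : R -> R) :
  is_solution c q f g a Rm phi ->
  (forall r, 0 < r -> Rbar_lt r Rm -> 0 <= Derive_n phi 2 r) ->
  forall u w, 0 < u -> u <= w -> Rbar_lt w Rm -> Derive phi u <= Derive phi w.
Proof.
  intros Hs H2 u w Hu Huw HwR.
  pose proof (sol_der c q f g a Rm phi Hs) as SD.
  destruct (Rle_lt_or_eq_dec u w Huw) as [Hl|He]; [|subst; lra].
  assert (InR : forall x, x <= w -> Rbar_lt x Rm) by (intros; apply (Rbar_lt_le x w); auto).
  destruct (mvt_bound (Derive phi) (Derive_n phi 2) u w (fun v => 0 <= v)) as [v [Hv E]]; auto.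
  - intros x Hx. apply SD. lra. apply InR. lra.
  - intros x Hx. apply der_cont with (Derive_n phi 2 x). apply SD. lra. apply InR. lra.
  - intros x Hx. apply H2. lra. apply InR; lra.
  - assert (0 <= v * (w - u)) by (apply Rmult_le_pos; lra). lra.
Qed.

Lemma convex_lt (c q : R) (f g : R -> R) (a : R) (Rm : Rbar) (phi : R -> R) :
  is_solution c q f g a Rm phi ->
  (forall r, 0 < r -> Rbar_lt r Rm -> 0 <= Derive_n phi 2 r) ->
  forall x y t, 0 <= x -> x < y -> Rbar_lt y Rm -> 0 <= t <= 1 ->
  phi (t * x + (1 - t) * y) <= t * phi x + (1 - t) * phi y.
Proof.
  intros Hs H2 x y t Hx Hxy HyR Ht.
  pose proof (psi_mono c q f g a Rm phi Hs H2) as PM.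
  destruct (Req_dec t 0) as [->|Ht0].
  { replace (0 * x + (1 - 0) * y) with y by ring. lra. }
  destruct (Req_dec t 1) as [->|Ht1].
  { replace (1 * x + (1 - 1) * y) with x by ring. lra. }
  set (z := t * x + (1 - t) * y).
  assert (Hz : x < z < y) by (unfold z; split; nra).
  assert (HzR : Rbar_lt z Rm) by (apply (Rbar_lt_le z y); lra || auto).
  destruct (phi_mvt c q f g a Rm phi Hs (fun v => v <= Derive phi z) x z) as [v1 [Hv1 E1]]; try lra; auto.
  { intros u Hu. apply PM; lra || auto. }
  destruct (phi_mvt c q f g a Rm phi Hs (fun v => Derive phi z <= v) z y) as [v2 [Hv2 E2]]; try lra; auto.
  { intros u Hu. apply PM; try lra. apply (Rbar_lt_le u y); lra || auto. }
  simpl in Hv1, Hv2.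
  replace (z - x) with ((1 - t) * (y - x)) in E1 by (unfold z; ring).
  replace (y - z) with (t * (y - x)) in E2 by (unfold z; ring).
  assert (EQ : t * phi x + (1 - t) * phi y - phi z = t * (1 - t) * (y - x) * (v2 - v1)).
  { assert (phi y = phi z + v2 * (t * (y - x))) by lra.
    assert (phi z = phi x + v1 * ((1 - t) * (y - x))) by lra.
    rewrite H, H0. ring. }
  assert (0 <= t * (1 - t) * (y - x) * (v2 - v1)).
  { apply Rmult_le_pos. apply Rmult_le_pos. apply Rmult_le_pos. lra. lra. lra. lra. }
  lra.
Qed.

Lemma convex_all (c q : R) (f g : R -> R) (a : R) (Rm : Rbar) (phi : R -> R) :
  is_solution c q f g a Rm phi ->
  (forall r, 0 < r -> Rbar_lt r Rm -> 0 <= Derive_n phi 2 r) ->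
  forall x y t, 0 <= x -> Rbar_lt x Rm -> 0 <= y -> Rbar_lt y Rm -> 0 <= t <= 1 ->
  phi (t * x + (1 - t) * y) <= t * phi x + (1 - t) * phi y.
Proof.
  intros Hs H2 x y t Hx HxR Hy HyR Ht.
  destruct (Rtotal_order x y) as [Hl|[He|Hg]].
  - apply (convex_lt c q f g a Rm phi); auto.
  - subst y. replace (t * x + (1 - t) * x) with x by ring. lra.
  - pose proof (convex_lt c q f g a Rm phi Hs H2 y x (1 - t) Hy Hg HxR ltac:(lra)) as K.
    replace ((1 - t) * y + (1 - (1 - t)) * x) with (t * x + (1 - t) * y) in K by ring. lra.
Qed.

Lemma right_deriv_of_derive (phi : R -> R) r l : is_derive phi r l -> is_right_deriv phi r l.
Proof.
  intros H. apply is_derive_Reals in H. unfold is_right_deriv. apply ev_lim.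
  intros e He. destruct (H e He) as [d Hd]. exists d. split. apply cond_pos.
  intros h Hh. apply Hd. lra. rewrite Rabs_pos_eq; lra.
Qed.

Lemma negpart_pos y : 0 < negpart y -> negpart y = - y /\ y < 0.
Proof.
  unfold negpart, Rmax. destruct (Rle_dec (- y) 0); intros; lra.
Qed.

Lemma bound_part (c q : R) (f g : R -> R) (a : R) (Rm : Rbar) (phi : R -> R) :
  0 < c -> 0 < q ->
  (forall x, continuous f x) -> (forall x, continuous g x) ->
  is_solution c q f g a Rm phi -> (forall x, 0 < f x) ->
  (forall r, 0 < r -> Rbar_lt r Rm -> 0 <= Derive_n phi 2 r) -> 1 <= c ->
  forall r d, 0 <= r -> Rbar_lt r Rm -> is_right_deriv phi r d ->
        0 < negpart (g (phi r)) ->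
        d <= Rpower (f (phi r) / negpart (g (phi r))) (1 / q).
Proof.
  intros Hc Hq Hf Hg Hs Hfp H2 Hc1 r d Hr HrR Hd Hn.
  pose proof (sol_der c q f g a Rm phi Hs) as SD.
  pose proof (psi_pos c q f g a Rm phi Hc Hq Hf Hg Hs Hfp) as PP.
  destruct Hs as (HR0 & HC2 & Hc0 & Hode & Ha & Hrd & Hp0 & _).
  destruct (Rle_lt_or_eq_dec 0 r Hr) as [Hrp|Hr0].
  2:{ subst r. assert (d = 0) by (apply (lim_uniq _ _ _ Hd Hrd)). subst d.
      left; apply Rpower_pos. }
  assert (Hdd : d = Derive phi r).
  { apply (lim_uniq _ _ _ Hd). apply right_deriv_of_derive. apply SD; auto. }
  subst d.
  destruct (negpart_pos _ Hn) as [En Hgn]. rewrite En.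
  specialize (Hode r Hrp HrR). specialize (H2 r Hrp HrR). specialize (PP r Hrp HrR).
  specialize (Hfp (phi r)).
  rewrite abspow_pos in Hode by auto.
  set (A := Rpower (Derive phi r) q) in *.
  assert (HA : 0 < A) by apply Rpower_pos.
  assert (0 <= (c - 1) / r * Derive phi r).
  { apply Rmult_le_pos; [|lra]. apply Rdiv_le_0_compat; lra. }
  assert (HAle : A <= f (phi r) / - g (phi r)).
  { apply (Rmult_le_reg_r (- g (phi r))). lra.
    unfold Rdiv. rewrite Rmult_assoc, Rinv_l by lra. nra. }
  assert (E : Derive phi r = Rpower A (1 / q)).
  { unfold A. rewrite Rpower_mult. replace (q * (1 / q)) with 1 by (field; lra).
    rewrite Rpower_1; auto. }
  rewrite E. apply Rle_Rpower_l. left. apply Rdiv_lt_0_compat; lra. lra.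
Qed.

Lemma part3 (c q : R) (f g : R -> R) (a : R) (Rm : Rbar) (phi : R -> R) :
  0 < c -> 0 < q ->
  (forall x, continuous f x) -> (forall x, continuous g x) ->
  is_solution c q f g a Rm phi -> (forall x, 0 < f x) ->
  (forall x y, x <= y -> f x <= f y) ->
  (forall x y, x <= y -> g x <= g y) ->
  (forall x, 0 <= g x) -> 1 <= c ->
  forall r, 0 < r -> Rbar_lt r Rm -> Derive phi r / r <= Derive_n phi 2 r.
Proof.
  intros Hc Hq Hf Hg Hs Hfp Hfm Hgm Hg0 Hc1 r0 Hr0 HR0.
  destruct (Rle_lt_dec (Derive phi r0 / r0) (Derive_n phi 2 r0)) as [H|H]; auto. exfalso.
  pose proof (psi2_nonneg c q f g a Rm phi Hc Hq Hf Hg Hs Hfp Hfm Hgm Hc1) as H2.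
  pose proof (psi_mono c q f g a Rm phi Hs H2) as PM.
  pose proof (sol_der c q f g a Rm phi Hs) as SD.
  pose proof (psi_pos c q f g a Rm phi Hc Hq Hf Hg Hs Hfp) as PP.
  pose proof (phi_incr c q f g a Rm phi Hc Hq Hf Hg Hs Hfp) as PI.
  destruct (L_val c q f g a Rm phi Hc Hq Hf Hg Hs) as [L [HL HcL]].
  pose proof Hs as Hs'.
  destruct Hs' as (HR0' & HC2 & Hc0 & Hode & Ha & Hrd & Hp0 & _).
  assert (InR : forall x, 0 < x <= r0 -> Rbar_lt x Rm) by (intros; apply (Rbar_lt_le x r0); lra || auto).
  set (v := fun x => Derive phi x / x).
  set (F := fun x => f (phi x) + g (phi x) * abspow (Derive phi x) q).
  assert (Hode0 := Hode r0 Hr0 HR0).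
  assert (EF0 : F r0 = Derive_n phi 2 r0 + (c - 1) * v r0) by (unfold F, v; rewrite <- Hode0; field; lra).
  set (m := F r0 / c).
  assert (Hmv : m < v r0).
  { unfold m. apply (Rmult_lt_reg_r c); [lra|]. unfold Rdiv. rewrite Rmult_assoc, Rinv_l by lra.
    unfold v in *. nra. }
  assert (HLm : L <= m).
  { unfold m. apply (Rmult_le_reg_r c); [lra|]. unfold Rdiv. rewrite Rmult_assoc, Rinv_l by lra.
    rewrite Rmult_1_r, Rmult_comm, HcL. unfold F. rewrite <- Ha.
    assert (f (phi 0) <= f (phi r0)) by (apply Hfm; left; apply PI; lra || auto).
    assert (0 <= g (phi r0) * abspow (Derive phi r0) q) by (apply Rmult_le_pos; [apply Hg0|apply abspow_ge0]).
    lra. }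
  set (m' := (m + v r0) / 2).
  destruct (ev_ex _ (ev_and _ _ (ev_ratio phi Rm L HR0' HC2 Hp0 HL ((m' - L) / 2) ltac:(unfold m'; lra))
                               (ev_small r0 Hr0))) as [eps [Heps [Heps1 Heps2]]].
  fold (v eps) in Heps1. apply Rabs_le_between in Heps1.
  destruct (last_nonneg (fun x => m' - v x) eps r0) as [r1 [Hr1 [Z1 Neg]]]; try (unfold m' in *; lra).
  { intros x Hx. apply continuity_pt_minus. apply continuity_pt_const. intros ? ?; auto.
    apply der_cont with ((Derive_n phi 2 x - Derive phi x / x) / x). apply der_ratio. apply SD. lra. apply InR; lra. lra. }
  simpl in Z1, Neg.
  destruct (mvt_bound v (fun x => (Derive_n phi 2 x - Derive phi x / x) / x) r1 r0 (fun w => w < 0))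
    as [w [Hw E]]; try lra.
  - intros x Hx. apply der_ratio. apply SD. lra. apply InR; lra. lra.
  - intros x Hx. apply der_cont with ((Derive_n phi 2 x - Derive phi x / x) / x). apply der_ratio. apply SD. lra. apply InR; lra. lra.
  - intros x Hx. assert (Hxp : 0 < x) by lra. assert (HxR := InR x ltac:(lra)).
    assert (Hvx : m' < v x) by (specialize (Neg x ltac:(lra)); lra).
    assert (HFx : F x <= F r0).
    { unfold F. assert (Hph : phi x <= phi r0) by (left; apply PI; lra || auto).
      assert (Hps : Derive phi x <= Derive phi r0) by (apply PM; lra || auto).
      rewrite !abspow_pos by (apply PP; lra || auto).
      assert (Rpower (Derive phi x) q <= Rpower (Derive phi r0) q).
      { apply Rle_Rpower_l. lra. split; try exact Hps; try (apply PP; lra || auto). }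
      assert (f (phi x) <= f (phi r0)) by (apply Hfm; auto).
      assert (g (phi x) <= g (phi r0)) by (apply Hgm; auto).
      pose proof (Hg0 (phi x)). pose proof (Rpower_pos (Derive phi x) q).
      assert (g (phi x) * Rpower (Derive phi x) q <= g (phi r0) * Rpower (Derive phi r0) q)
        by (apply Rmult_le_compat; lra).
      lra. }
    assert (Hodex := Hode x Hxp HxR).
    assert (EFx : F x = Derive_n phi 2 x + (c - 1) * v x) by (unfold F, v; rewrite <- Hodex; field; lra).
    assert (Fr0m : F r0 = c * m) by (unfold m; field; lra).
    assert (m < v x) by (unfold m' in *; lra).
    assert (Derive_n phi 2 x < v x) by nra.
    apply (Rmult_lt_reg_r x); [lra|]. unfold Rdiv. rewrite Rmult_assoc, Rinv_l, Rmult_1_r, Rmult_0_l by lra.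
    unfold v in *. lra.
  - assert (w * (r0 - r1) < 0) by (apply Rmult_neg_pos; lra || (apply Rlt_gt; lra)).
    unfold m' in *. lra.
Qed.

Theorem lemma2p1 (c q : R) (f g : R -> R) (a : R) (Rm : Rbar) (phi : R -> R) :
  0 < c -> 0 < q ->
  (forall x, continuous f x) -> (forall x, continuous g x) ->
  is_solution c q f g a Rm phi ->
  (* (i) *)
  ((forall x, 0 < f x) ->
     forall r s, 0 <= r -> r < s -> Rbar_lt s Rm -> phi r < phi s) /\
  (* (ii) *)
  ((forall x, 0 < f x) ->
   (forall x y, x <= y -> f x <= f y) ->
   (forall x y, x <= y -> g x <= g y) ->
   1 <= c ->
     (forall x y t, 0 <= x -> Rbar_lt x Rm -> 0 <= y -> Rbar_lt y Rm ->
        0 <= t <= 1 ->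
        phi (t * x + (1 - t) * y) <= t * phi x + (1 - t) * phi y) /\
     (forall r d, 0 <= r -> Rbar_lt r Rm -> is_right_deriv phi r d ->
        0 < negpart (g (phi r)) ->
        d <= Rpower (f (phi r) / negpart (g (phi r))) (1 / q))) /\
  (* (iii) *)
  ((forall x, 0 < f x) ->
   (forall x y, x <= y -> f x <= f y) ->
   (forall x y, x <= y -> g x <= g y) ->
   (forall x, 0 <= g x) ->
   1 <= c ->
     forall r, 0 < r -> Rbar_lt r Rm -> Derive phi r / r <= Derive_n phi 2 r).
Proof.
  intros Hc Hq Hf Hg Hs. split; [|split].
  - intros Hfp. apply (phi_incr c q f g a Rm phi); auto.
  - intros Hfp Hfm Hgm Hc1.
    pose proof (psi2_nonneg c q f g a Rm phi Hc Hq Hf Hg Hs Hfp Hfm Hgm Hc1) as H2.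
    split.
    + apply (convex_all c q f g a Rm phi Hs H2).
    + apply (bound_part c q f g a Rm phi); auto.
  - intros Hfp Hfm Hgm Hg0 Hc1. apply (part3 c q f g a Rm phi); auto.
Qed.
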